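(* Assume $y_2\ne0$ and $p_1\ne-1$. Then $\widetilde w_0=0$ in $\mathfrak B(V)$ if and only if $(\widetilde q_{12}q_{22}-1)(q_{22}+1)(q_{11}\widetilde q_{12}^{\,2}q_{22}+1)=0$.
   Context: $\Bbbk$ algebraically closed of characteristic $0$. $V$ is braided of diagonal type with basis $x_1,x_2$, $c(x_i\otimes x_j)=q_{ij}x_j\otimes x_i$, $q_{ij}\in\Bbbk^\times$, $q_{ii}\ne1$, $\widetilde q_{12}=q_{12}q_{21}$. $\mathfrak B(V)$ is the Nichols algebra, $\mathbb Z^2$-graded by $\deg x_i=\alpha_i$; $q_{\alpha\beta}$ is the bicharacter with $q_{\alpha_i\alpha_j}=q_{ij}$. $y_0=x_2$, $y_{k+1}=x_1y_k-q_{11}^kq_{12}y_kx_1$, $\beta_k=k\alpha_1+\alpha_2$, $p_k=q_{11}^{k^2}\widetilde q_{12}^{\,k}q_{22}$, $(n)_q=1+\dots+q^{n-1}$. $w_0=y_2y_0-q_{\beta_2\beta_0}y_0y_2$ and $\widetilde w_0=w_0-\dfrac{q_{\beta_1\beta_0}(2)_{q_{11}}(1-q_{11}\widetilde q_{12})}{1+p_1}y_1^2$. *)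

(* Defs.v *)
From HB Require Import structures.
From mathcomp Require Import all_boot all_order all_algebra all_fingroup.
Set Implicit Arguments. Unset Strict Implicit. Unset Printing Implicit Defensive.
Import Order.TTheory GRing.Theory Num.Theory.
Local Open Scope ring_scope.

Definition i1 : 'I_2 := ord0.
Definition i2 : 'I_2 := ord_max.

Section Nichols.
Variable K : fieldType.
(* braiding matrix: c(x_i (x) x_j) = q i j x_j (x) x_i *)
Variable q : 'I_2 -> 'I_2 -> K.

(* Tensor algebra T(V): an element is given by its coefficient on each word
   x_{w_1} ... x_{w_n} (w : seq 'I_2).  (Arbitrary coefficient functions
   give the completion; all elements used here are polynomials.) *)
Definition tens := seq 'I_2 -> K.

Definition tadd (u v : tens) : tens := fun w => u w + v w.
Definition tscale (c : K) (u : tens) : tens := fun w => c * u w.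
Definition tsub (u v : tens) : tens := fun w => u w - v w.
Definition tmul (u v : tens) : tens :=
  fun w => \sum_(k < (size w).+1) u (take k w) * v (drop k w).
Definition tx (i : 'I_2) : tens := fun w => if w == [:: i] then 1 else 0.

(* Quantum (braided) symmetrizer Omega_n = sum over sigma in S_n of the
   Matsumoto lift of sigma, applied degreewise; (Omega u) w is the
   coefficient of the word w.  For a source word v the letter at position a
   goes to position s a; each crossing of v_a (left) over v_b (right)
   contributes the factor q v_a v_b. *)
Definition qsym (u : tens) : tens := fun w =>
  \sum_(s : 'S_(size w))
    let v := fun a : 'I_(size w) => nth i1 w (s a) in
    (\prod_(a : 'I_(size w)) \prod_(b : 'I_(size w) | (a < b)%N && (s b < s a)%N)
        q (v a) (v b))
    * u [seq v a | a <- enum 'I_(size w)].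

(* u = 0 in the Nichols algebra B(V) = T(V) / (sum_n ker Omega_n). *)
Definition nichols_zero (u : tens) : Prop := forall w, qsym u w = 0.

Definition qt : K := q i1 i2 * q i2 i1.

(* bicharacter on Z^2 (nonnegative part suffices here):
   q_{alpha beta} with alpha = a.1 alpha_1 + a.2 alpha_2 *)
Definition coord (a : nat * nat) (i : 'I_2) : nat := if i == i1 then a.1 else a.2.
Definition qb (a b : nat * nat) : K :=
  \prod_(i < 2) \prod_(j < 2) q i j ^+ (coord a i * coord b j).
Definition beta (k : nat) : nat * nat := (k, 1%N).

Fixpoint y (k : nat) : tens :=
  match k with
  | 0%N => tx i2
  | k'.+1 => tsub (tmul (tx i1) (y k'))
                 (tscale (q i1 i1 ^+ k' * q i1 i2) (tmul (y k') (tx i1)))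
  end.

Definition p (k : nat) : K := q i1 i1 ^+ (k * k) * qt ^+ k * q i2 i2.

Definition qint (n : nat) (x : K) : K := \sum_(i < n) x ^+ i.

Definition w0 : tens := tsub (tmul (y 2) (y 0)) (tscale (qb (beta 2) (beta 0)) (tmul (y 0) (y 2))).

Definition wt0 : tens :=
  tsub w0 (tscale (qb (beta 1) (beta 0) * qint 2 (q i1 i1) * (1 - q i1 i1 * qt) / (1 + p 1))
                  (tmul (y 1) (y 1))).
End Nichols.

(* Main.v *)
Require Import Defs.
From HB Require Import structures.
From mathcomp Require Import all_boot all_order all_algebra all_fingroup.
From mathcomp Require Import ring.
From Stdlib Require Import PeanoNat.
Import GRing.Theory.
Local Open Scope ring_scope.

Fixpoint plist (n : nat) : seq (seq nat) :=
  match n with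
  | 0%N => [:: [::]]
  | n'.+1 => flatten [seq [seq j :: map (bump j) c | c <- plist n'] | j <- iota 0 n'.+1]
  end.
Definition pcode {n} (s : 'S_n) : seq nat := [seq val (s i) | i <- enum 'I_n].

Lemma sum_perm_rec (R : nmodType) n (F : 'S_n.+1 -> R) :
  \sum_(s : 'S_n.+1) F s = \sum_(j : 'I_n.+1) \sum_(s : 'S_n) F (lift_perm ord0 j s).
Proof.
rewrite (partition_big (fun s : 'S_n.+1 => s ord0) predT) //=.
apply: eq_bigr => j0 _.
rewrite (reindex (lift_perm ord0 j0)); last first.
  pose i0 : 'I_n.+1 := ord0.
  pose ulsf i (s : 'S_n.+1) k := odflt k (unlift (s i) (s (lift i k))).
  have ulsfK i (s : 'S_n.+1) k: lift (s i) (ulsf i s k) = s (lift i k).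
    rewrite /ulsf; have:= neq_lift i k.
    by rewrite -(can_eq (permK s)) => /unlift_some[] ? ? ->.
  have inj_ulsf: injective (ulsf i0 _).
    move=> s; apply: can_inj (ulsf (s i0) s^-1%g) _ => k'.
    by rewrite {1}/ulsf ulsfK !permK liftK.
  exists (fun s => perm (inj_ulsf s)) => [s _ | s].
    by apply/permP=> k'; rewrite permE /ulsf lift_perm_lift lift_perm_id liftK.
  move/(s _ =P _) => si0; apply/permP=> k.
  case: (unliftP i0 k) => [k'|] ->; rewrite ?lift_perm_id //.
  by rewrite lift_perm_lift -si0 permE ulsfK.
by apply: eq_bigl => s; rewrite lift_perm_id eqxx.
Qed.

Lemma pcode_lift n (j : 'I_n.+1) (s : 'S_n) :
  pcode (lift_perm ord0 j s) = (val j) :: map (bump j) (pcode s).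
Proof.
rewrite /pcode enum_ordSl /= lift_perm_id; congr (_ :: _).
by rewrite -!map_comp; apply: eq_map => k /=; rewrite lift_perm_lift.
Qed.

Lemma sum_plist (R : nmodType) n (G : seq nat -> R) :
  \sum_(s : 'S_n) G (pcode s) = \sum_(c <- plist n) G c.
Proof.
elim: n G => [|n IH] G.
  rewrite big_seq1 (eq_bigr (fun=> G [::])); last first.
    by move=> s _; rewrite /pcode enum_ord0.
  by rewrite sumr_const card_Sn.
rewrite sum_perm_rec.
have -> : plist n.+1 = flatten [seq [seq j :: map (bump j) c | c <- plist n] | j <- iota 0 n.+1] by [].
rewrite big_flatten big_map.
transitivity (\sum_(j < n.+1) \sum_(c <- plist n) G (val j :: map (bump j) c)).
  apply: eq_bigr => j _.
  rewrite -(IH (fun c => G (val j :: map (bump j) c))).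
  by apply: eq_bigr => s _; rewrite pcode_lift.
rewrite -(big_mkord xpredT (fun j => \sum_(c <- plist n) G (j :: map (bump j) c))).
rewrite /index_iota subn0; apply: eq_bigr => j _.
by rewrite big_map.
Qed.

Section Q.
Variable K : fieldType.
Variable q : 'I_2 -> 'I_2 -> K.

Definition Gt (w : seq 'I_2) (u : tens K) (c : seq nat) : K :=
  (\prod_(a <- iota 0 (size w)) \prod_(b <- iota 0 (size w) | (a < b)%N && (nth 0%N c b < nth 0%N c a)%N)
      q (nth i1 w (nth 0%N c a)) (nth i1 w (nth 0%N c b)))
  * u [seq nth i1 w (nth 0%N c a) | a <- iota 0 (size w)].

Lemma nth_pcode n (s : 'S_n) (a : 'I_n) : nth 0%N (pcode s) a = val (s a).
Proof. by rewrite /pcode (nth_map a) ?size_enum_ord // nth_ord_enum. Qed.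

Lemma qsymE (u : tens K) w : qsym q u w = \sum_(c <- plist (size w)) Gt w u c.
Proof.
rewrite -sum_plist /qsym; apply: eq_bigr => s _ /=.
rewrite /Gt; congr (_ * _).
  have E : iota 0 (size w) = index_iota 0 (size w) by rewrite /index_iota subn0.
  rewrite E big_mkord; apply: eq_bigr => a _.
  rewrite big_mkord.
  apply: eq_big => [b|b _]; by rewrite !nth_pcode.
congr u; rewrite -val_enum_ord -map_comp; apply: eq_map => a /=.
by rewrite nth_pcode.
Qed.
End Q.

Lemma tmulE (K : fieldType) (u v : tens K) w :
  tmul u v w = \sum_(k <- iota 0 (size w).+1) u (take k w) * v (drop k w).
Proof.
by rewrite /tmul -(big_mkord xpredT (fun k => u (take k w) * v (drop k w))) /index_iota subn0.
Qed.

Section Lin.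
Variable K : fieldType.
Variable q : 'I_2 -> 'I_2 -> K.
Lemma qsymB (u v : tens K) w : qsym q (tsub u v) w = qsym q u w - qsym q v w.
Proof. by rewrite /qsym -sumrB; apply: eq_bigr => s _ /=; rewrite /tsub mulrBr. Qed.
Lemma qsymZ c (u : tens K) w : qsym q (tscale c u) w = c * qsym q u w.
Proof. by rewrite /qsym mulr_sumr; apply: eq_bigr => s _ /=; rewrite /tscale mulrCA. Qed.

Lemma lift00 : lift ord0 ord0 = i2 :> 'I_2.
Proof. exact: val_inj. Qed.
Lemma qbE a b : qb q a b = q i1 i1 ^+ (a.1 * b.1) * q i1 i2 ^+ (a.1 * b.2) *
   (q i2 i1 ^+ (a.2 * b.1) * q i2 i2 ^+ (a.2 * b.2)).
Proof. rewrite /qb !big_ord_recl !big_ord0 !lift00 /coord /=. by rewrite !mulr1. Qed.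
Lemma w0E : w0 q = tsub (tmul (y q 2) (y q 0)) (tscale (q i1 i2 ^+ 2 * q i2 i2) (tmul (y q 0) (y q 2))).
Proof. rewrite /w0 qbE; congr (tsub _ (tscale _ _)) => /=; ring. Qed.
End Lin.

Lemma big_foldr (R : Type) (idx : R) (op : R -> R -> R) (I : Type) (s : seq I) (P : pred I) (F : I -> R) :
  \big[op/idx]_(i <- s | P i) F i = foldr (fun i acc => if P i then op (F i) acc else acc) idx s.
Proof. by elim: s => [|x s IH]; rewrite ?big_nil ?big_cons ?IH. Qed.

Lemma eq_foldr (A B : Type) (f g : A -> B -> B) z s :
  (forall x acc, f x acc = g x acc) -> foldr f z s = foldr g z s.
Proof. by move=> H; elim: s => //= x s ->. Qed.

Lemma ltn_ltb a b : (a < b)%N = Nat.ltb a b.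
Proof.
case: ssrnat.ltP => h; symmetry; [by apply/Nat.ltb_lt|by apply/Nat.ltb_nlt].
Qed.

Section Q2.
Variable K : fieldType.
Variable q : 'I_2 -> 'I_2 -> K.
Definition Gf (w : seq 'I_2) (u : tens K) (c : seq nat) : K :=
  (foldr (fun a acc => foldr (fun b acc2 =>
        if Nat.ltb a b && Nat.ltb (nth 0%N c b) (nth 0%N c a)
        then q (nth i1 w (nth 0%N c a)) (nth i1 w (nth 0%N c b)) * acc2 else acc2) 1 (iota 0 (size w)) * acc)
     1 (iota 0 (size w)))
  * u [seq nth i1 w (nth 0%N c a) | a <- iota 0 (size w)].

Lemma qsymF (u : tens K) w : qsym q u w = foldr (fun c acc => Gf w u c + acc) 0 (plist (size w)).
Proof.
rewrite qsymE big_foldr; apply: eq_foldr => c acc.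
rewrite /Gt /Gf !big_foldr; congr (_ * _ + _); apply: eq_foldr => a acc1 /=.
by rewrite big_foldr; congr (_ * _); apply: eq_foldr => b acc2; rewrite !ltn_ltb.
Qed.

Lemma plist3 : plist 3 = [:: [:: 0; 1; 2]; [:: 0; 2; 1]; [:: 1; 0; 2]; [:: 1; 2; 0]; [:: 2; 0; 1]; [:: 2; 1; 0]]%N.
Proof. by vm_compute. Qed.
Lemma plist4 : plist 4 = [:: [:: 0; 1; 2; 3]; [:: 0; 1; 3; 2]; [:: 0; 2; 1; 3]; [:: 0; 2; 3; 1]; [:: 0; 3; 1; 2]; [:: 0; 3; 2; 1]; [:: 1; 0; 2; 3]; [:: 1; 0; 3; 2]; [:: 1; 2; 0; 3]; [:: 1; 2; 3; 0]; [:: 1; 3; 0; 2]; [:: 1; 3; 2; 0]; [:: 2; 0; 1; 3]; [:: 2; 0; 3; 1]; [:: 2; 1; 0; 3]; [:: 2; 1; 3; 0]; [:: 2; 3; 0; 1]; [:: 2; 3; 1; 0]; [:: 3; 0; 1; 2]; [:: 3; 0; 2; 1]; [:: 3; 1; 0; 2]; [:: 3; 1; 2; 0]; [:: 3; 2; 0; 1]; [:: 3; 2; 1; 0]]%N.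
Proof. by vm_compute. Qed.
End Q2.

Lemma tmulF (K : fieldType) (u v : tens K) w :
  tmul u v w = foldr (fun k acc => u (take k w) * v (drop k w) + acc) 0 (iota 0 (size w).+1).
Proof. by rewrite tmulE big_foldr. Qed.

Section H.
Variable K : fieldType.
Variable q : 'I_2 -> 'I_2 -> K.

Definition hom (a b : nat) (u : tens K) :=
  forall w, (count_mem i1 w != a) || (count_mem i2 w != b) -> u w = 0.

Lemma hom_tx1 : hom 1 0 (tx K i1).
Proof. by move=> w H; rewrite /tx; case: eqP => // E; move: H; rewrite E. Qed.
Lemma hom_tx2 : hom 0 1 (tx K i2).
Proof. by move=> w H; rewrite /tx; case: eqP => // E; move: H; rewrite E. Qed.

Lemma hom_tmul {a b c d u v} : hom a b u -> hom c d v -> hom (a + c) (b + d) (tmul u v).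
Proof.
move=> hu hv w H; rewrite /tmul big1 // => k _.
case: (boolP ((count_mem i1 (take k w) != a) || (count_mem i2 (take k w) != b))) => [/hu->|].
  by rewrite mul0r.
rewrite negb_or !negbK => /andP[/eqP ea /eqP eb].
have E1 : count_mem i1 w = (a + count_mem i1 (drop k w))%N.
  by rewrite -{1}(cat_take_drop k w) count_cat ea.
have E2 : count_mem i2 w = (b + count_mem i2 (drop k w))%N.
  by rewrite -{1}(cat_take_drop k w) count_cat eb.
rewrite E1 E2 !eqn_add2l in H.
by rewrite hv ?mulr0.
Qed.

Lemma hom_tsub {a b u v} : hom a b u -> hom a b v -> hom a b (tsub u v).
Proof. by move=> hu hv w H; rewrite /tsub hu // hv // subr0. Qed.
Lemma hom_tscale {a b} c {u} : hom a b u -> hom a b (tscale c u).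
Proof. by move=> hu w H; rewrite /tscale hu // mulr0. Qed.

Lemma hom_y k : hom k 1 (y q k).
Proof.
elim: k => [|k IH] /=; first exact: hom_tx2.
apply: hom_tsub.
  by have := hom_tmul hom_tx1 IH; rewrite add0n add1n.
by apply: hom_tscale; have := hom_tmul IH hom_tx1; rewrite addn0 addn1.
Qed.

Lemma hom_wt0 : hom 2 2 (wt0 q).
Proof.
rewrite /wt0 /w0; apply: hom_tsub; last by apply: hom_tscale; exact: (hom_tmul (hom_y 1) (hom_y 1)).
apply: hom_tsub; first exact: (hom_tmul (hom_y 2) (hom_y 0)).
by apply: hom_tscale; exact: (hom_tmul (hom_y 0) (hom_y 2)).
Qed.

Lemma perm_word w (s : 'S_(size w)) :
  perm_eq [seq nth i1 w (s a) | a <- enum 'I_(size w)] w.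
Proof.
have Hw : map (nth i1 w \o val) (enum 'I_(size w)) = w.
  by rewrite map_comp val_enum_ord -/(mkseq _ _) mkseq_nth.
have E : [seq nth i1 w (s a) | a <- enum 'I_(size w)] =
   map (nth i1 w \o val) (map s (enum 'I_(size w))).
  by rewrite -[in RHS]map_comp.
rewrite E.
apply: (@perm_trans _ (map (nth i1 w \o val) (enum 'I_(size w)))); last by rewrite Hw.
apply: perm_map; apply: uniq_perm.
- by rewrite (map_inj_uniq (@perm_inj _ s)) enum_uniq.
- exact: enum_uniq.
by move=> x; rewrite -{1}(permKV s x) mem_map ?mem_enum //; exact: perm_inj.
Qed.

Lemma qsym_hom a b u w : hom a b u ->
  (count_mem i1 w != a) || (count_mem i2 w != b) -> qsym q u w = 0.
Proof.
move=> hu H; rewrite /qsym big1 // => s _ /=.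
rewrite hu ?mulr0 //.
have Hp := perm_word w s.
by rewrite !(seq.permP Hp).
Qed.

Lemma ord2P (x : 'I_2) : x = i1 \/ x = i2.
Proof. by case: x => [[|[|m]] Hm]; [left; apply: val_inj|right; apply: val_inj|]. Qed.

Lemma size_count (w : seq 'I_2) : size w = (count_mem i1 w + count_mem i2 w)%N.
Proof.
elim: w => [|x w IH] //=; case: (ord2P x) => ->; rewrite IH /=.
  by rewrite add1n.
by rewrite add0n addnS.
Qed.

Lemma words22 w (P : seq 'I_2 -> Prop) : count_mem i1 w = 2%N -> count_mem i2 w = 2%N ->
  P [:: i1; i1; i2; i2] -> P [:: i1; i2; i1; i2] -> P [:: i1; i2; i2; i1] ->
  P [:: i2; i1; i1; i2] -> P [:: i2; i1; i2; i1] -> P [:: i2; i2; i1; i1] -> P w.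
Proof.
move=> h1 h2; have := size_count w; rewrite h1 h2.
case: w h1 h2 => [|x1 [|x2 [|x3 [|x4 [|x5 w]]]]] //= h1 h2 _.
by case: (ord2P x1) h1 h2 => ->; case: (ord2P x2) => ->; case: (ord2P x3) => ->;
   case: (ord2P x4) => -> //= _ _.
Qed.

Lemma words21 w (P : seq 'I_2 -> Prop) : count_mem i1 w = 2%N -> count_mem i2 w = 1%N ->
  P [:: i1; i1; i2] -> P [:: i1; i2; i1] -> P [:: i2; i1; i1] -> P w.
Proof.
move=> h1 h2; have := size_count w; rewrite h1 h2.
case: w h1 h2 => [|x1 [|x2 [|x3 [|x4 w]]]] //= h1 h2 _.
by case: (ord2P x1) h1 h2 => ->; case: (ord2P x2) => ->; case: (ord2P x3) => -> //= _ _.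
Qed.
End H.
Section C.
Variable K : fieldType.
Variable q : 'I_2 -> 'I_2 -> K.
Lemma qs_112 (u : tens K) : qsym q u [:: i1; i1; i2] = (1 + (q i1 i1)) * u [:: i1; i1; i2] + ((q i2 i1) + (q i1 i1)*(q i2 i1)) * u [:: i1; i2; i1] + ((q i2 i1)^+2 + (q i1 i1)*(q i2 i1)^+2) * u [:: i2; i1; i1].
Proof. rewrite qsymF -[size _]/3%N plist3 /Gf /=. ring. Qed.

Lemma qs_121 (u : tens K) : qsym q u [:: i1; i2; i1] = ((q i1 i2) + (q i1 i1)*(q i1 i2)) * u [:: i1; i1; i2] + (1 + (q i1 i1)*(q i1 i2)*(q i2 i1)) * u [:: i1; i2; i1] + ((q i2 i1) + (q i1 i1)*(q i2 i1)) * u [:: i2; i1; i1].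
Proof. rewrite qsymF -[size _]/3%N plist3 /Gf /=. ring. Qed.

Lemma qs_211 (u : tens K) : qsym q u [:: i2; i1; i1] = ((q i1 i2)^+2 + (q i1 i1)*(q i1 i2)^+2) * u [:: i1; i1; i2] + ((q i1 i2) + (q i1 i1)*(q i1 i2)) * u [:: i1; i2; i1] + (1 + (q i1 i1)) * u [:: i2; i1; i1].
Proof. rewrite qsymF -[size _]/3%N plist3 /Gf /=. ring. Qed.

Lemma qs_1122 (u : tens K) : qsym q u [:: i1; i1; i2; i2] = (1 + (q i2 i2) + (q i1 i1) + (q i1 i1)*(q i2 i2)) * u [:: i1; i1; i2; i2] + ((q i2 i1) + (q i2 i1)*(q i2 i2) + (q i1 i1)*(q i2 i1) + (q i1 i1)*(q i2 i1)*(q i2 i2)) * u [:: i1; i2; i1; i2] + ((q i2 i1)^+2 + (q i2 i1)^+2*(q i2 i2) + (q i1 i1)*(q i2 i1)^+2 + (q i1 i1)*(q i2 i1)^+2*(q i2 i2)) * u [:: i1; i2; i2; i1] + ((q i2 i1)^+2 + (q i2 i1)^+2*(q i2 i2) + (q i1 i1)*(q i2 i1)^+2 + (q i1 i1)*(q i2 i1)^+2*(q i2 i2)) * u [:: i2; i1; i1; i2] + ((q i2 i1)^+3 + (q i2 i1)^+3*(q i2 i2) + (q i1 i1)*(q i2 i1)^+3 + (q i1 i1)*(q i2 i1)^+3*(q i2 i2)) * u [:: i2; i1; i2; i1] + ((q i2 i1)^+4 + (q i2 i1)^+4*(q i2 i2) + (q i1 i1)*(q i2 i1)^+4 + (q i1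 i1)*(q i2 i1)^+4*(q i2 i2)) * u [:: i2; i2; i1; i1].
Proof. rewrite qsymF -[size _]/4%N plist4 /Gf /=. ring. Qed.

Lemma qs_1212 (u : tens K) : qsym q u [:: i1; i2; i1; i2] = ((q i1 i2) + (q i1 i2)*(q i2 i2) + (q i1 i1)*(q i1 i2) + (q i1 i1)*(q i1 i2)*(q i2 i2)) * u [:: i1; i1; i2; i2] + (1 + (q i1 i2)*(q i2 i1)*(q i2 i2) + (q i1 i1)*(q i1 i2)*(q i2 i1) + (q i1 i1)*(q i1 i2)*(q i2 i1)*(q i2 i2)) * u [:: i1; i2; i1; i2] + ((q i2 i1) + (q i2 i1)*(q i2 i2) + (q i1 i1)*(q i1 i2)*(q i2 i1)^+2 + (q i1 i1)*(q i1 i2)*(q i2 i1)^+2*(q i2 i2)) * u [:: i1; i2; i2; i1] + ((q i2 i1) + (q i1 i2)*(q i2 i1)^+2*(q i2 i2) + (q i1 i1)*(q i2 i1) + (q i1 i1)*(q i1 i2)*(q i2 i1)^+2*(q i2 i2)) * u [:: i2; i1; i1; i2] + ((q i2 i1)^+2 + (q i2 i1)^+2*(q i2 i2) + (q i1 i1)*(q i2 i1)^+2 + (q i1 i1)*(q i1 i2)*(q i2 i1)^+3*(q i2 i2)) * u [:: i2; i1; i2; i1] + ((q i2 i1)^+3 + (q i2 i1)^+3*(q i2 i2) + (q i1 i1)*(q i2 i1)^+3 + (q i1 i1)*(q i2 i1)^+3*(q i2 i2)) * u [:: i2; i2; i1; i1].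
Proof. rewrite qsymF -[size _]/4%N plist4 /Gf /=. ring. Qed.

Lemma qs_1221 (u : tens K) : qsym q u [:: i1; i2; i2; i1] = ((q i1 i2)^+2 + (q i1 i2)^+2*(q i2 i2) + (q i1 i1)*(q i1 i2)^+2 + (q i1 i1)*(q i1 i2)^+2*(q i2 i2)) * u [:: i1; i1; i2; i2] + ((q i1 i2) + (q i1 i2)*(q i2 i2) + (q i1 i1)*(q i1 i2)^+2*(q i2 i1) + (q i1 i1)*(q i1 i2)^+2*(q i2 i1)*(q i2 i2)) * u [:: i1; i2; i1; i2] + (1 + (q i2 i2) + (q i1 i1)*(q i1 i2)^+2*(q i2 i1)^+2 + (q i1 i1)*(q i1 i2)^+2*(q i2 i1)^+2*(q i2 i2)) * u [:: i1; i2; i2; i1] + ((q i1 i2)*(q i2 i1) + (q i1 i2)*(q i2 i1)*(q i2 i2) + (q i1 i1)*(q i1 i2)*(q i2 i1) + (q i1 i1)*(q i1 i2)*(q i2 i1)*(q i2 i2)) * u [:: i2; i1; i1; i2] + ((q i2 i1) + (q i2 i1)*(q i2 i2) + (q i1 i1)*(q i1 i2)*(q i2 i1)^+2 + (q i1 i1)*(q i1 i2)*(q i2 i1)^+2*(q i2 i2)) * u [:: i2; i1; i2; i1] + ((q i2 i1)^+2 + (q i2 i1)^+2*(q i2 i2) + (q i1 i1)*(q i2 i1)^+2 + (q i1 i1)*(q i2 i1)^+2*(q i2 i2)) * u [:: i2; i2; i1; i1].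
Proof. rewrite qsymF -[size _]/4%N plist4 /Gf /=. ring. Qed.

Lemma qs_2112 (u : tens K) : qsym q u [:: i2; i1; i1; i2] = ((q i1 i2)^+2 + (q i1 i2)^+2*(q i2 i2) + (q i1 i1)*(q i1 i2)^+2 + (q i1 i1)*(q i1 i2)^+2*(q i2 i2)) * u [:: i1; i1; i2; i2] + ((q i1 i2) + (q i1 i2)^+2*(q i2 i1)*(q i2 i2) + (q i1 i1)*(q i1 i2) + (q i1 i1)*(q i1 i2)^+2*(q i2 i1)*(q i2 i2)) * u [:: i1; i2; i1; i2] + ((q i1 i2)*(q i2 i1) + (q i1 i2)*(q i2 i1)*(q i2 i2) + (q i1 i1)*(q i1 i2)*(q i2 i1) + (q i1 i1)*(q i1 i2)*(q i2 i1)*(q i2 i2)) * u [:: i1; i2; i2; i1] + (1 + (q i1 i2)^+2*(q i2 i1)^+2*(q i2 i2) + (q i1 i1) + (q i1 i1)*(q i1 i2)^+2*(q i2 i1)^+2*(q i2 i2)) * u [:: i2; i1; i1; i2] + ((q i2 i1) + (q i1 i2)*(q i2 i1)^+2*(q i2 i2) + (q i1 i1)*(q i2 i1) + (q i1 i1)*(q i1 i2)*(q i2 i1)^+2*(q i2 i2)) * u [:: i2; i1; i2; i1] + ((q i2 i1)^+2 + (q i2 i1)^+2*(q i2 i2) + (q i1 i1)*(q i2 i1)^+2 + (q i1 i1)*(q i2 i1)^+2*(q i2 i2)) * u [:: i2; i2; i1; i1].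
Proof. rewrite qsymF -[size _]/4%N plist4 /Gf /=. ring. Qed.

Lemma qs_2121 (u : tens K) : qsym q u [:: i2; i1; i2; i1] = ((q i1 i2)^+3 + (q i1 i2)^+3*(q i2 i2) + (q i1 i1)*(q i1 i2)^+3 + (q i1 i1)*(q i1 i2)^+3*(q i2 i2)) * u [:: i1; i1; i2; i2] + ((q i1 i2)^+2 + (q i1 i2)^+2*(q i2 i2) + (q i1 i1)*(q i1 i2)^+2 + (q i1 i1)*(q i1 i2)^+3*(q i2 i1)*(q i2 i2)) * u [:: i1; i2; i1; i2] + ((q i1 i2) + (q i1 i2)*(q i2 i2) + (q i1 i1)*(q i1 i2)^+2*(q i2 i1) + (q i1 i1)*(q i1 i2)^+2*(q i2 i1)*(q i2 i2)) * u [:: i1; i2; i2; i1] + ((q i1 i2) + (q i1 i2)^+2*(q i2 i1)*(q i2 i2) + (q i1 i1)*(q i1 i2) + (q i1 i1)*(q i1 i2)^+2*(q i2 i1)*(q i2 i2)) * u [:: i2; i1; i1; i2] + (1 + (q i1 i2)*(q i2 i1)*(q i2 i2) + (q i1 i1)*(q i1 i2)*(q i2 i1) + (q i1 i1)*(q i1 i2)*(q i2 i1)*(q i2 i2)) * u [:: i2; i1; i2; i1] + ((q i2 i1) + (q i2 i1)*(q i2 i2) + (q i1 i1)*(q i2 i1) + (q i1 i1)*(q i2 i1)*(q i2 i2)) * u [:: i2; i2; i1; i1].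
Proof. rewrite qsymF -[size _]/4%N plist4 /Gf /=. ring. Qed.

Lemma qs_2211 (u : tens K) : qsym q u [:: i2; i2; i1; i1] = ((q i1 i2)^+4 + (q i1 i2)^+4*(q i2 i2) + (q i1 i1)*(q i1 i2)^+4 + (q i1 i1)*(q i1 i2)^+4*(q i2 i2)) * u [:: i1; i1; i2; i2] + ((q i1 i2)^+3 + (q i1 i2)^+3*(q i2 i2) + (q i1 i1)*(q i1 i2)^+3 + (q i1 i1)*(q i1 i2)^+3*(q i2 i2)) * u [:: i1; i2; i1; i2] + ((q i1 i2)^+2 + (q i1 i2)^+2*(q i2 i2) + (q i1 i1)*(q i1 i2)^+2 + (q i1 i1)*(q i1 i2)^+2*(q i2 i2)) * u [:: i1; i2; i2; i1] + ((q i1 i2)^+2 + (q i1 i2)^+2*(q i2 i2) + (q i1 i1)*(q i1 i2)^+2 + (q i1 i1)*(q i1 i2)^+2*(q i2 i2)) * u [:: i2; i1; i1; i2] + ((q i1 i2) + (q i1 i2)*(q i2 i2) + (q i1 i1)*(q i1 i2) + (q i1 i1)*(q i1 i2)*(q i2 i2)) * u [:: i2; i1; i2; i1] + (1 + (q i2 i2) + (q i1 i1) + (q i1 i1)*(q i2 i2)) * u [:: i2; i2; i1; i1].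
Proof. rewrite qsymF -[size _]/4%N plist4 /Gf /=. ring. Qed.
Lemma vy2_112 : y q 2 [:: i1; i1; i2] = (1).
Proof. rewrite /= /tsub /tscale !tmulF /= ?tmulF /= ?tmulF /= ?tmulF /= /tx /=. ring. Qed.

Lemma vy2_121 : y q 2 [:: i1; i2; i1] = (-((q i1 i2)) + -((q i1 i1)*(q i1 i2))).
Proof. rewrite /= /tsub /tscale !tmulF /= ?tmulF /= ?tmulF /= ?tmulF /= /tx /=. ring. Qed.

Lemma vy2_211 : y q 2 [:: i2; i1; i1] = ((q i1 i1)*(q i1 i2)^+2).
Proof. rewrite /= /tsub /tscale !tmulF /= ?tmulF /= ?tmulF /= ?tmulF /= /tx /=. ring. Qed.

Lemma vA_1122 : tmul (y q 2) (y q 0) [:: i1; i1; i2; i2] = (1).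
Proof. rewrite /= /tsub /tscale !tmulF /= ?tmulF /= ?tmulF /= ?tmulF /= /tx /=. ring. Qed.

Lemma vA_1212 : tmul (y q 2) (y q 0) [:: i1; i2; i1; i2] = (-((q i1 i2)) + -((q i1 i1)*(q i1 i2))).
Proof. rewrite /= /tsub /tscale !tmulF /= ?tmulF /= ?tmulF /= ?tmulF /= /tx /=. ring. Qed.

Lemma vA_1221 : tmul (y q 2) (y q 0) [:: i1; i2; i2; i1] = 0.
Proof. rewrite /= /tsub /tscale !tmulF /= ?tmulF /= ?tmulF /= ?tmulF /= /tx /=. ring. Qed.

Lemma vA_2112 : tmul (y q 2) (y q 0) [:: i2; i1; i1; i2] = ((q i1 i1)*(q i1 i2)^+2).
Proof. rewrite /= /tsub /tscale !tmulF /= ?tmulF /= ?tmulF /= ?tmulF /= /tx /=. ring. Qed.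

Lemma vA_2121 : tmul (y q 2) (y q 0) [:: i2; i1; i2; i1] = 0.
Proof. rewrite /= /tsub /tscale !tmulF /= ?tmulF /= ?tmulF /= ?tmulF /= /tx /=. ring. Qed.

Lemma vA_2211 : tmul (y q 2) (y q 0) [:: i2; i2; i1; i1] = 0.
Proof. rewrite /= /tsub /tscale !tmulF /= ?tmulF /= ?tmulF /= ?tmulF /= /tx /=. ring. Qed.

Lemma vB_1122 : tmul (y q 0) (y q 2) [:: i1; i1; i2; i2] = 0.
Proof. rewrite /= /tsub /tscale !tmulF /= ?tmulF /= ?tmulF /= ?tmulF /= /tx /=. ring. Qed.

Lemma vB_1212 : tmul (y q 0) (y q 2) [:: i1; i2; i1; i2] = 0.
Proof. rewrite /= /tsub /tscale !tmulF /= ?tmulF /= ?tmulF /= ?tmulF /= /tx /=. ring. Qed.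

Lemma vB_1221 : tmul (y q 0) (y q 2) [:: i1; i2; i2; i1] = 0.
Proof. rewrite /= /tsub /tscale !tmulF /= ?tmulF /= ?tmulF /= ?tmulF /= /tx /=. ring. Qed.

Lemma vB_2112 : tmul (y q 0) (y q 2) [:: i2; i1; i1; i2] = (1).
Proof. rewrite /= /tsub /tscale !tmulF /= ?tmulF /= ?tmulF /= ?tmulF /= /tx /=. ring. Qed.

Lemma vB_2121 : tmul (y q 0) (y q 2) [:: i2; i1; i2; i1] = (-((q i1 i2)) + -((q i1 i1)*(q i1 i2))).
Proof. rewrite /= /tsub /tscale !tmulF /= ?tmulF /= ?tmulF /= ?tmulF /= /tx /=. ring. Qed.

Lemma vB_2211 : tmul (y q 0) (y q 2) [:: i2; i2; i1; i1] = ((q i1 i1)*(q i1 i2)^+2).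
Proof. rewrite /= /tsub /tscale !tmulF /= ?tmulF /= ?tmulF /= ?tmulF /= /tx /=. ring. Qed.

Lemma vC_1122 : tmul (y q 1) (y q 1) [:: i1; i1; i2; i2] = 0.
Proof. rewrite /= /tsub /tscale !tmulF /= ?tmulF /= ?tmulF /= ?tmulF /= /tx /=. ring. Qed.

Lemma vC_1212 : tmul (y q 1) (y q 1) [:: i1; i2; i1; i2] = (1).
Proof. rewrite /= /tsub /tscale !tmulF /= ?tmulF /= ?tmulF /= ?tmulF /= /tx /=. ring. Qed.

Lemma vC_1221 : tmul (y q 1) (y q 1) [:: i1; i2; i2; i1] = (-((q i1 i2))).
Proof. rewrite /= /tsub /tscale !tmulF /= ?tmulF /= ?tmulF /= ?tmulF /= /tx /=. ring. Qed.

Lemma vC_2112 : tmul (y q 1) (y q 1) [:: i2; i1; i1; i2] = (-((q i1 i2))).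
Proof. rewrite /= /tsub /tscale !tmulF /= ?tmulF /= ?tmulF /= ?tmulF /= /tx /=. ring. Qed.

Lemma vC_2121 : tmul (y q 1) (y q 1) [:: i2; i1; i2; i1] = ((q i1 i2)^+2).
Proof. rewrite /= /tsub /tscale !tmulF /= ?tmulF /= ?tmulF /= ?tmulF /= /tx /=. ring. Qed.

Lemma vC_2211 : tmul (y q 1) (y q 1) [:: i2; i2; i1; i1] = 0.
Proof. rewrite /= /tsub /tscale !tmulF /= ?tmulF /= ?tmulF /= ?tmulF /= /tx /=. ring. Qed.
End C.

Section F.
Variable K : fieldType.
Variable q : 'I_2 -> 'I_2 -> K.

Lemma qint2 (x : K) : qint 2 x = 1 + x.
Proof. by rewrite /qint big_ord_recl big_ord1 /= expr0 expr1. Qed.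

Lemma wt0_val w : qsym q (wt0 q) w =
  qsym q (tmul (y q 2) (y q 0)) w - q i1 i2 ^+ 2 * q i2 i2 * qsym q (tmul (y q 0) (y q 2)) w
  - (q i1 i2 * q i2 i2 * (1 + q i1 i1) * (1 - q i1 i1 * qt q) / (1 + p q 1)) * qsym q (tmul (y q 1) (y q 1)) w.
Proof.
rewrite /wt0 w0E !qsymB !qsymZ qbE qint2 /=.
ring.
Qed.

Hypothesis hp : 1 + p q 1 != 0.

Let a := q i1 i1.
Let d := q i2 i2.
Let t := qt q.

Ltac fin w := rewrite wt0_val !w ?vA_1122 ?vA_1212 ?vA_1221 ?vA_2112 ?vA_2121 ?vA_2211
  ?vB_1122 ?vB_1212 ?vB_1221 ?vB_2112 ?vB_2121 ?vB_2211
  ?vC_1122 ?vC_1212 ?vC_1221 ?vC_2112 ?vC_2121 ?vC_2211; rewrite /p /qt /= mul1n expr1; field; move: hp; rewrite /p /qt /= mul1n expr1; exact: id.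

Lemma qw1122 : qsym q (wt0 q) [:: i1; i1; i2; i2] * (1 + p q 1) =
  - ((1 + a) * (1 - t) * (1 - a * t) * ((t * d - 1) * (d + 1) * (a * t ^+ 2 * d + 1))).
Proof. rewrite /a /d /t. fin qs_1122. Qed.
Lemma qw1212 : qsym q (wt0 q) [:: i1; i2; i1; i2] = 0.
Proof. fin qs_1212. Qed.
Lemma qw1221 : qsym q (wt0 q) [:: i1; i2; i2; i1] = 0.
Proof. fin qs_1221. Qed.
Lemma qw2112 : qsym q (wt0 q) [:: i2; i1; i1; i2] = 0.
Proof. fin qs_2112. Qed.
Lemma qw2121 : qsym q (wt0 q) [:: i2; i1; i2; i1] = 0.
Proof. fin qs_2121. Qed.
Lemma qw2211 : qsym q (wt0 q) [:: i2; i2; i1; i1] = 0.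
Proof. fin qs_2211. Qed.
End F.

Section G.
Variable K : fieldType.
Variable q : 'I_2 -> 'I_2 -> K.
Lemma qy112 : qsym q (y q 2) [:: i1; i1; i2] = (1 + q i1 i1) * (1 - qt q) * (1 - q i1 i1 * qt q).
Proof. by rewrite qs_112 vy2_112 vy2_121 vy2_211 /qt; ring. Qed.
Lemma qy121 : qsym q (y q 2) [:: i1; i2; i1] = 0.
Proof. by rewrite qs_121 vy2_112 vy2_121 vy2_211; ring. Qed.
Lemma qy211 : qsym q (y q 2) [:: i2; i1; i1] = 0.
Proof. by rewrite qs_211 vy2_112 vy2_121 vy2_211; ring. Qed.
End G.

Theorem lemma4 (K : closedFieldType) (q : 'I_2 -> 'I_2 -> K)
  (hchar : [pchar K] =i pred0)
  (hq0 : forall i j, q i j != 0)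
  (hq1 : forall i, q i i != 1)
  (hy2 : ~ nichols_zero q (y q 2))
  (hp1 : p q 1 != -1) :
  nichols_zero q (wt0 q) <->
  (qt q * q i2 i2 - 1) * (q i2 i2 + 1) * (q i1 i1 * qt q ^+ 2 * q i2 i2 + 1) = 0.
Proof.
have hp : 1 + p q 1 != 0 by rewrite addrC addr_eq0.
have HF : (1 + q i1 i1) * (1 - qt q) * (1 - q i1 i1 * qt q) != 0.
  apply/eqP => HF; apply: hy2 => w.
  case: (boolP ((count_mem i1 w != 2%N) || (count_mem i2 w != 1%N))) => H.
    by apply: qsym_hom H; exact: hom_y.
  move: H; rewrite negb_or !negbK => /andP[/eqP h1 /eqP h2].
  apply: (@words21 w (fun w => qsym q (y q 2) w = 0) h1 h2).
  - by rewrite qy112.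
  - exact: qy121.
  - exact: qy211.
split.
  move=> HZ; have := @qw1122 K q hp; rewrite HZ mul0r => /esym/eqP.
  by rewrite oppr_eq0 mulf_eq0 (negbTE HF) /= => /eqP.
move=> HP w.
case: (boolP ((count_mem i1 w != 2%N) || (count_mem i2 w != 2%N))) => H.
  by apply: qsym_hom H; exact: hom_wt0.
move: H; rewrite negb_or !negbK => /andP[/eqP h1 /eqP h2].
apply: (@words22 w (fun w => qsym q (wt0 q) w = 0) h1 h2).
- have := @qw1122 K q hp; rewrite HP mulr0 oppr0 => /eqP.
  by rewrite mulf_eq0 (negbTE hp) orbF => /eqP.
- exact: qw1212.
- exact: qw1221.
- exact: qw2112.
- exact: qw2121.
- exact: qw2211.
Qed.
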